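(* Let $G$ be a connected graph on $n\geq 3$ vertices with $q(G)=2$ and minimum degree $\delta(G)\geq 3$, and let $v\in V(G)$ have eccentricity $\epsilon(v)$. Suppose every vertex of $N_i(v)$ for $i=2,3,\ldots,\epsilon(v)-1$ has exactly two predecessors, and each $N_i(v)$ for $i=1,2,\ldots,\epsilon(v)-1$ is an independent set. Then $d_0\le d_1\le\cdots\le d_{\epsilon(v)-1}$, where $d_i=|N_i(v)|$.
   Context: For a graph $G$ on $n$ vertices, $\mathcal{S}(G)$ is the set of real symmetric $n\times n$ matrices $A=[a_{ij}]$ with $a_{ij}\neq0$ for $i\ne j$ iff $\{i,j\}\in E(G)$ (diagonal unrestricted); $q(G)$ is the minimum number of distinct eigenvalues of a matrix in $\mathcal{S}(G)$. For $v\in V(G)$, $N_i(v)$ is the set of vertices at distance exactly $i$ from $v$ (so $N_0(v)=\{v\}$), and the eccentricity $\epsilon(v)$ is the maximum distance from $v$ to a vertex of $G$. If $u\in N_{i-1}(v)$ and $w\in N_i(v)$ are adjacent, $u$ is a predecessor of $w$ and $w$ a successor of $u$. *)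

(* Defs.v *)
From HB Require Import structures.
From mathcomp Require Import all_boot all_order all_algebra.
From mathcomp Require Import reals.
Set Implicit Arguments. Unset Strict Implicit. Unset Printing Implicit Defensive.
Import Order.TTheory GRing.Theory Num.Theory.

Definition simple_graph n (e : rel 'I_n) : Prop :=
  (forall x y, e x y = e y x) /\ (forall x, ~~ e x x).

Definition connected_graph n (e : rel 'I_n) : Prop :=
  forall x y, connect e x y.

Definition degree n (e : rel 'I_n) (x : 'I_n) : nat := #|[set y | e x y]|.

Fixpoint ball n (e : rel 'I_n) (v : 'I_n) (k : nat) : {set 'I_n} :=
  if k is k'.+1 then ball e v k' :|: [set y | [exists x in ball e v k', e x y]]
  else [set v].

(* distance: least k with w reachable in at most k steps (shortest walks have
   length < n, so searching k < n suffices in a connected graph) *)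
Definition dist n (e : rel 'I_n) (v w : 'I_n) : nat :=
  find (fun k => w \in ball e v k) (iota 0 n).

Definition Nset n (e : rel 'I_n) (v : 'I_n) (i : nat) : {set 'I_n} :=
  [set w | dist e v w == i].

Definition ecc n (e : rel 'I_n) (v : 'I_n) : nat := \max_(w : 'I_n) dist e v w.

Definition preds n (e : rel 'I_n) (v w : 'I_n) : {set 'I_n} :=
  [set u | (u \in Nset e v (dist e v w).-1) && e u w].

Definition independent n (e : rel 'I_n) (A : {set 'I_n}) : Prop :=
  forall x y, x \in A -> y \in A -> ~~ e x y.

Local Open Scope ring_scope.

Definition in_SG (R : realType) n (e : rel 'I_n) (A : 'M[R]_n) : Prop :=
  A^T = A /\ (forall i j, i != j -> (A i j != 0) = e i j).

Definition num_distinct_eig (R : realType) n (A : 'M[R]_n) (k : nat) : Prop :=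
  exists s : seq R, [/\ uniq s, size s = k & forall a, eigenvalue A a <-> a \in s].

Definition q_eq (R : realType) n (e : rel 'I_n) (m : nat) : Prop :=
  (exists A : 'M[R]_n, in_SG e A /\ num_distinct_eig A m) /\
  (forall (A : 'M[R]_n) k, in_SG e A -> num_distinct_eig A k -> (m <= k)%N).

(* Main.v *)
Require Import Defs.
From HB Require Import structures.
From mathcomp Require Import all_boot all_order all_algebra.
From mathcomp Require Import reals.
From mathcomp Require Import zify sesquilinear spectral complex.
Set Implicit Arguments. Unset Strict Implicit. Unset Printing Implicit Defensive.
Import Order.TTheory GRing.Theory Num.Theory.
Section Graph.
Variables (n : nat) (e : rel 'I_n) (v : 'I_n).
Hypothesis esym : forall x y, e x y = e y x.
Hypothesis eirr : forall x, ~~ e x x.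
Hypothesis econn : forall x y, connect e x y.

Lemma ball_sub k : ball e v k \subset ball e v k.+1.
Proof. by rewrite /= subsetUl. Qed.

Lemma ball_mono k m : k <= m -> ball e v k \subset ball e v m.
Proof.
elim: m => [|m IH]; first by rewrite leqn0 => /eqP ->.
rewrite leq_eqVlt => /orP [/eqP -> //|]; rewrite ltnS => /IH h.
exact: subset_trans h (ball_sub m).
Qed.

Lemma ball_edge k x y : x \in ball e v k -> e x y -> y \in ball e v k.+1.
Proof.
by move=> xb exy; rewrite /= in_setU; apply/orP; right; rewrite inE; apply/existsP; exists x; rewrite xb.
Qed.

Lemma ball_path p x k : x \in ball e v k -> path e x p -> last x p \in ball e v (k + size p).
Proof.
elim: p x k => [|y p IH] x k xb /=; first by rewrite addn0.
case/andP=> exy pp; rewrite addnS -addSn; exact: IH (ball_edge xb exy) pp.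
Qed.

Lemma reach x : exists2 k, k < n & x \in ball e v k.
Proof.
have /connectP [p pp ->] := econn v x.
case: (shortenP pp) => p' pp' up' _.
exists (size p'); last by rewrite -(add0n (size p')); apply: ball_path pp'; rewrite /= inE.
have : size (v :: p') <= #|'I_n| by rewrite -(card_uniqP up'); apply: max_card.
by rewrite card_ord.
Qed.

Local Notation D x := (dist e v x).

Lemma dist_spec x : D x < n /\ x \in ball e v (D x).
Proof.
have [k kn xb] := reach x.
have hs : has (fun k => x \in ball e v k) (iota 0 n).
  by apply/hasP; exists k; rewrite ?mem_iota.
have := hs; rewrite has_find size_iota => fl; split => //.
have := nth_find 0 hs; rewrite nth_iota //.
Qed.

Lemma dist_le x k : x \in ball e v k -> D x <= k.
Proof.
move=> xb; case: (ltnP k n) => kn; last by have [h _] := dist_spec x; apply: ltnW (leq_trans h kn).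
rewrite leqNgt; apply/negP => h.
have := before_find 0 h; rewrite nth_iota // xb => //.
Qed.

Lemma dist_edge x y : e x y -> D y <= (D x).+1.
Proof. by move=> exy; have [_ h] := dist_spec x; apply: dist_le (ball_edge h exy). Qed.

Lemma dist_edge2 x y : e x y -> D y <= (D x).+1 /\ D x <= (D y).+1.
Proof. by move=> exy; split; apply: dist_edge; rewrite // esym. Qed.

Lemma dist0 w : (D w == 0) = (w == v).
Proof.
apply/eqP/eqP => [h|->]; last by apply/eqP; rewrite -leqn0 dist_le //= inE.
by have [_] := dist_spec w; rewrite h /= inE => /eqP.
Qed.

End Graph.


Section Alg.
Local Open Scope ring_scope.
Lemma sym_two_eig (R : rcfType) n (A : 'M[R]_n) (l1 l2 : R) :
  A^T = A -> (forall a, eigenvalue A a -> a = l1 \/ a = l2) ->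
  (A - l1%:M) *m (A - l2%:M) = 0.
Proof.
move=> Asym Heig.
pose f := real_complex R.
pose Ac := map_mx f A.
have Acsym : Ac \is symmetricmx.
  by apply/is_hermitianmxP; rewrite expr0 scale1r map_mx_id // map_trmx Asym.
have Acreal : Ac \is a realmx.
  apply/mxOverP => i j; rewrite mxE realE ler0c /f.
  case: (lerP 0 (A i j)) => //= h.
  have -> : 0 = (0:R)%:C%C by [].
  by rewrite lecR ltW.
have Aherm := realsym_hermsym Acsym Acreal.
pose P := spectralmx Ac; pose d := spectral_diag Ac.
have /orthomx_spectralP AcE := hermitian_normalmx Aherm.
have dreal := hermitian_spectral_diag_real Aherm.
have Punit : P \in unitmx by exact: spectral_unit.
have PAc : P *m Ac = diag_mx d *m P.
  by rewrite [in LHS]AcE !mulmxA mulmxV // mul1mx.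
have rowE j : row j P *m Ac = d 0 j *: row j P.
  rewrite -row_mul PAc; apply/rowP => k; rewrite !mxE.
  rewrite (bigD1 j) //= big1 ?addr0; first by rewrite !mxE eqxx mulr1n.
  by move=> l /negPf nl; rewrite !mxE eq_sym nl mulr0n mul0r.
have rowN0 j : row j P != 0.
  apply/negP => /eqP r0.
  have := unitarymxP (spectral_unitarymx Ac).
  move/(congr1 (row j)); rewrite row_mul r0 mul0mx row1 => /rowP /(_ j).
  by rewrite !mxE !eqxx /= => /esym/eqP; rewrite oner_eq0.
have dj j : (d 0 j - f l1) * (d 0 j - f l2) = 0.
  have eigj : eigenvalue Ac (d 0 j).
    by apply/eigenvalueP; exists (row j P).
  have rdj : d 0 j \is Num.real by apply: (mxOverP dreal).
  have dE : d 0 j = f (complex.Re (d 0 j)) by rewrite /f complexRe; apply/esym/Creal_ReP.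
  move: eigj; rewrite dE eigenvalue_root_char -map_char_poly fmorph_root.
  rewrite -eigenvalue_root_char => /Heig [->|->]; rewrite subrr ?mul0r ?mulr0 //.
have step j (c : R[i]) (B : 'M_n) : row j P *m ((Ac - c%:M) *m B) = (d 0 j - c) *: (row j P *m B).
  rewrite mulmxA (mulmxBr (row j P)) rowE mul_mx_scalar -scalerBl.
  by rewrite scalemxAl.
have Mc0 : (Ac - (f l1)%:M) *m (Ac - (f l2)%:M) = 0.
  have : P *m ((Ac - (f l1)%:M) *m (Ac - (f l2)%:M)) = 0.
    apply/row_matrixP => j; rewrite row_mul row0 step -[X in _ *m X]mulmx1 step.
    by rewrite mulmx1 scalerA dj scale0r.
  by move/(congr1 (mulmx (invmx P))); rewrite mulmx0 mulKmx.
apply/eqP; rewrite -(map_mx_eq0 f) map_mxM !map_mxB !map_scalar_mx.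
by rewrite Mc0.
Qed.

Lemma common2 (R : realType) n (e : rel 'I_n) : simple_graph e -> q_eq R e 2 ->
  forall u x w, u != x -> ~~ e u x -> e u w -> e w x ->
  exists w', [&& w' != w, e u w' & e w' x].
Proof.
move=> [esym eirr] [[A [[At Aoff] [s [us ss Hs]]]] _] u x w nux nex euw ewx.
case: s us ss Hs => [|l1 [|l2 []]] // _ _ Hs.
have Heig a : eigenvalue A a -> a = l1 \/ a = l2.
  by move/Hs; rewrite !inE => /orP [] /eqP ->; [left|right].
have /matrixP /(_ u x) := sym_two_eig At Heig.
rewrite !mxE (bigD1 w) //=.
have nwu : w != u by apply: contraTneq euw => ->; rewrite (negPf (eirr u)).
have nwx : w != x by apply: contraTneq ewx => ->; rewrite (negPf (eirr x)).
have Aux : A u x = 0 by apply/eqP/negPn; rewrite Aoff.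
case: (boolP [exists w', [&& w' != w, e u w' & e w' x]]) => [/existsP [w' h]|]; first by exists w'.
rewrite negb_exists => /forallP Hn.
rewrite big1 ?addr0.
  rewrite !mxE (negPf nwx) eq_sym (negPf nwu) !mulr0n !subr0 => /eqP.
  have h1 := Aoff u w; have h2 := Aoff w x; rewrite eq_sym in nwu.
  by rewrite mulf_eq0; case/orP => /eqP h; [move: (h1 nwu)|move: (h2 nwx)]; rewrite h eqxx ?euw ?ewx.
move=> k nkw; rewrite !mxE.
have [->|nku] := eqVneq k u; first by rewrite Aux (negPf nux) mulr0n subr0 mulr0.
have [->|nkx] := eqVneq k x; first by rewrite Aux mulr0n subr0 mul0r.
rewrite !mulr0n !subr0.
have := Hn k; rewrite nkw /= => /nandP [h|h].
  by move/negbTE: h; rewrite -Aoff 1?eq_sym // => /negbFE/eqP <-; rewrite mul0r.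
by move/negbTE: h; rewrite -Aoff // => /negbFE/eqP ->; rewrite mulr0.
Qed.

End Alg.

Theorem mainTheorem5 (R : realType) (n : nat) (e : rel 'I_n) (v : 'I_n) :
  simple_graph e -> connected_graph e -> (3 <= n)%N ->
  q_eq R e 2 ->
  (forall x, 3 <= degree e x)%N ->
  (forall i, (2 <= i <= (ecc e v).-1)%N ->
     forall w, w \in Nset e v i -> #|preds e v w| = 2) ->
  (forall i, (1 <= i <= (ecc e v).-1)%N -> independent e (Nset e v i)) ->
  forall i, (i.+1 <= (ecc e v).-1)%N ->
    (#|Nset e v i| <= #|Nset e v i.+1|)%N.
Proof.
move=> [esym eirr] econn n3 hq hdeg Hpred Hind i hi.
have P1 := common2 (conj esym eirr) hq.
move: Hpred Hind hi; set E := (ecc e v).-1 => Hpred Hind hi.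
have de := @dist_edge2 n e v esym econn.
have succ j u : 1 <= j <= E -> dist e v u = j -> exists w, e u w && (dist e v w == j.+1).
  move=> jr du.
  case: (boolP [exists w, e u w && (dist e v w == j.+1)]) => [/existsP[w h]|]; first by exists w.
  rewrite negb_exists => /forallP Hn; exfalso.
  have Hi := Hind j jr.
  pose Pr := [set y | e u y & dist e v y == j.-1].
  have sub : [set y | e u y] \subset Pr.
    apply/subsetP => y; rewrite !inE => euy; rewrite euy /=.
    have [h1 h2] := de _ _ euy.
    have nj : dist e v y != j.
      apply/negP => /eqP dy; move: (Hi u y); rewrite !inE du dy eqxx euy.
      by move=> /(_ isT isT).
    have nj1 : dist e v y != j.+1 by move: (Hn y); rewrite euy.
    move: h1 h2 nj nj1 jr; rewrite du; lia.
  have cPr : #|Pr| <= 2.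
    case/andP: jr => j1 jE; case: (ltnP 1 j) => j2.
      rewrite -(Hpred j _ u); last by rewrite inE du.
        apply: subset_leq_card; apply/subsetP => y; rewrite !inE du esym.
        by case/andP => -> ->.
      by rewrite j2.
    have j0 : j.-1 = 0 by lia.
    apply: (@leq_trans #|[set v]|); last by rewrite cards1.
    apply: subset_leq_card; apply/subsetP => y; rewrite !inE /=.
    by case/andP => _; rewrite j0 (@dist0 n e v econn).
  have := hdeg u; rewrite /degree => h3.
  have := subset_leq_card sub; lia.
case: i hi => [|i] hi.
  have -> : Nset e v 0 = [set v].
    by apply/setP => y; rewrite !inE (@dist0 n e v econn).
  rewrite cards1 card_gt0; apply/set0Pn.
  have : 0 < #|[set y | e v y]| by have := hdeg v; rewrite /degree; lia.
  rewrite card_gt0.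
  case/set0Pn => y; rewrite inE => evy; exists y; rewrite inE.
  have [h1 _] := de _ _ evy.
  have : dist e v y != 0 by rewrite (@dist0 n e v econn); apply: contraTneq evy => ->; rewrite (negPf (eirr v)).
  have : dist e v v = 0 by apply/eqP; rewrite (@dist0 n e v econn).
  move: h1; lia.
set k := i.+1 in hi *.
have two u : dist e v u = k -> 2 <= #|[set w | e u w & dist e v w == k.+1]|.
  move=> du.
  have [w /andP[euw /eqP dw]] := succ k u (ltac:(lia)) du.
  have [x /andP[ewx /eqP dx]] := succ k.+1 w (ltac:(lia)) dw.
  have nux : u != x by apply/eqP => ux; move: du dx; rewrite ux; lia.
  have nex : ~~ e u x.
    by apply/negP => eux; have [h1 _] := de _ _ eux; move: h1; rewrite du dx; lia.
  have [w' /and3P[nw'w euw' ew'x]] := P1 u x w nux nex euw ewx.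
  have dw' : dist e v w' = k.+1.
    have [h1 _] := de _ _ euw'; have [h2 _] := de _ _ ew'x; move: h1 h2; rewrite du dx; lia.
  have -> : 2 = #|[set w; w']| by rewrite cards2 eq_sym nw'w.
  apply: subset_leq_card; apply/subsetP => y; rewrite !inE.
  by case/orP => /eqP ->; rewrite ?euw ?euw' ?dw ?dw' eqxx.
have predsE w : dist e v w = k.+1 -> #|[set u | dist e v u == k & e u w]| = 2.
  move=> dw; rewrite -(Hpred k.+1 (ltac:(lia)) w); last by rewrite inE dw.
  by apply: eq_card => u; rewrite !inE dw.
have cnt : \sum_(u in Nset e v k) #|[set w | e u w & dist e v w == k.+1]|
         = \sum_(w in Nset e v k.+1) #|[set u | dist e v u == k & e u w]|.
  have c1 u : #|[set w | e u w & dist e v w == k.+1]| = \sum_(w in Nset e v k.+1) (e u w : nat).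
    rewrite -sum1_card big_mkcond [RHS]big_mkcond /=; apply: eq_bigr => w _.
    by rewrite !inE andbC; case: (dist e v w == k.+1); case: (e u w).
  have c2 w : #|[set u | dist e v u == k & e u w]| = \sum_(u in Nset e v k) (e u w : nat).
    rewrite -sum1_card big_mkcond [RHS]big_mkcond /=; apply: eq_bigr => u _.
    by rewrite !inE; case: (dist e v u == k); case: (e u w).
  rewrite (eq_bigr _ (fun u _ => c1 u)) (eq_bigr _ (fun w _ => c2 w)).
  exact: exchange_big.
have : 2 * #|Nset e v k| <= 2 * #|Nset e v k.+1|.
  rewrite ![2 * _]mulnC -!sum_nat_const.
  apply: (@leq_trans (\sum_(u in Nset e v k) #|[set w | e u w & dist e v w == k.+1]|)).
    by apply: leq_sum => u; rewrite inE => /eqP du; apply: two.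
  rewrite cnt; apply: eq_leq; apply: eq_bigr => w; rewrite inE => /eqP dw.
  by rewrite predsE.
lia.
Qed.
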